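(* Fix $\lambda_t\in\mathbb{R}^m_+$ and $h\in[0,1)$. For each deterministic policy $\pi$ define $\mathcal{T}^\pi_1:\mathbb{R}^{\mathcal{S}}\to\mathbb{R}^{\mathcal{S}}$ by $$[\mathcal{T}_1^\pi v](s) = [\mathcal{T}^\pi v](s) - \gamma h\langle P^o_{s,\pi(s)}, v - V^\pi_r + \lambda_t^\top V^\pi_g\rangle,$$ where $\mathcal{T}^\pi$ is the operator defined below. Then: (1) (Monotonicity) if $v_1\ge v_2$ componentwise then $\mathcal{T}_1^\pi v_1\ge\mathcal{T}_1^\pi v_2$; (2) (Transition invariance) for every $c\in\mathbb{R}$, $\mathcal{T}_1^\pi(v+c\mathbf{1}) = \mathcal{T}_1^\pi v + \gamma(1-h)c\mathbf{1}$; (3) (Contraction) $\mathcal{T}_1^\pi$ is a $\gamma(1-h)$-contraction in $\|\cdot\|_\infty$, and $V^\pi_r - \lambda_t^\top V^\pi_g$ is its unique fixed point.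
   Context: $\mathcal{S},\mathcal{A}$ finite, $\gamma\in[0,1)$. $P^o$ is a nominal kernel and $\mathcal{P}=\otimes_{(s,a)}\mathcal{P}_{s,a}$ an $(s,a)$-rectangular uncertainty set, $\mathcal{P}_{s,a}=\{P\in\Delta(\mathcal{S}):D(P,P^o_{s,a})\le\beta_{s,a}\}$ (minima over these sets taken to be attained). $r:\mathcal{S}\times\mathcal{A}\to[0,\bar R]$, $g=(g_1,\dots,g_m)$ with $g_i:\mathcal{S}\times\mathcal{A}\to[0,\tau_i]$. Policies $\pi:\mathcal{S}\to\mathcal{A}$ are deterministic and stationary. Robust values: $V^\pi_u(s)=\min_{\mathcal{K}\in\otimes_{t\ge0}\mathcal{P}}\mathbb{E}_{\mathcal{K}}[\sum_{t\ge0}\gamma^tu(s_t,a_t)\mid s_0=s,\pi]$ (worst case over sequences of kernels from $\mathcal{P}$), $V^\pi_g=(V^\pi_{g_i})_i$. The operator $\mathcal{T}^\pi$ is $[\mathcal{T}^{\pi} v](s) = (r - \lambda_t^{\top}g)(s, \pi(s)) + \gamma \langle P^o_{s, \pi(s)}, v \rangle + \gamma \min_{P_{s,\pi(s)} \in \mathcal{P}_{s,\pi(s)}} \langle P_{s, \pi(s)} - P^o_{s, \pi(s)}, V^{\pi}_{r} \rangle - \gamma \lambda_t^{\top} \min_{P_{s,\pi(s)} \in \mathcal{P}_{s,\pi(s)}} \langle P_{s, \pi(s)} - P^o_{s, \pi(s)}, V^{\pi}_{g} \rangle$, with the last minimum taken componentwise over the $g_i$ and with $V^\pi_r,V^\pi_g$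 fixed (independent of $v$). *)

(* Defs.v *)
From HB Require Import structures.
From mathcomp Require Import all_boot all_order all_algebra.
From mathcomp Require Import all_classical all_reals all_analysis.
Set Implicit Arguments. Unset Strict Implicit. Unset Printing Implicit Defensive.
Import Order.TTheory GRing.Theory Num.Theory.
Local Open Scope classical_set_scope.
Local Open Scope ring_scope.

Section RMDP.
Variables (R : realType) (S A : finType).

Definition is_dist (p : S -> R) : Prop :=
  (forall s, 0 <= p s) /\ \sum_(s : S) p s = 1.

Definition ip (p w : S -> R) : R := \sum_(s : S) p s * w s.

Definition unc_set (D : (S -> R) -> (S -> R) -> R) (beta : S -> A -> R)
  (Po : S -> A -> S -> R) (s : S) (a : A) : set (S -> R) :=
  [set p | is_dist p /\ D p (Po s a) <= beta s a].

(* a kernel K belongs to the rectangular set P = (x)_{(s,a)} P_{s,a} *)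
Definition kernel_in D beta Po (K : S -> A -> S -> R) : Prop :=
  forall s a, unc_set D beta Po s a (K s a).

Fixpoint state_dist (Ks : nat -> S -> A -> S -> R) (pi : S -> A) (s0 : S)
  (t : nat) : S -> R :=
  match t with
  | 0 => fun s => if s == s0 then 1 else 0
  | t'.+1 => fun s' =>
      \sum_(s : S) state_dist Ks pi s0 t' s * Ks t' s (pi s) s'
  end.

Definition disc_return (gamma : R) (Ks : nat -> S -> A -> S -> R)
  (pi : S -> A) (u : S -> A -> R) (s0 : S) : R :=
  limn (fun n => \sum_(0 <= t < n)
          (gamma ^+ t * \sum_(s : S) state_dist Ks pi s0 t s * u s (pi s))).

Definition robust_value D beta Po (gamma : R) (pi : S -> A) (u : S -> A -> R)
  (s0 : S) : R :=
  inf [set disc_return gamma Ks pi u s0 |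
       Ks in [set Ks | forall t, kernel_in D beta Po (Ks t)]].

Definition min_dev D beta Po (s : S) (a : A) (w : S -> R) : R :=
  inf [set ip (fun s' => p s' - Po s a s') w | p in unc_set D beta Po s a].

Definition Top D beta Po (gamma : R) (m : nat) (r : S -> A -> R)
  (g : 'I_m -> S -> A -> R) (lam : 'I_m -> R) (pi : S -> A) (v : S -> R)
  (s : S) : R :=
  (r s (pi s) - \sum_(i < m) lam i * g i s (pi s))
  + gamma * ip (Po s (pi s)) v
  + gamma * min_dev D beta Po s (pi s) (robust_value D beta Po gamma pi r)
  - gamma * \sum_(i < m) lam i *
      min_dev D beta Po s (pi s) (robust_value D beta Po gamma pi (g i)).

Definition T1op D beta Po (gamma : R) (m : nat) (r : S -> A -> R)
  (g : 'I_m -> S -> A -> R) (lam : 'I_m -> R) (h : R) (pi : S -> A)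
  (v : S -> R) (s : S) : R :=
  Top D beta Po gamma r g lam pi v s
  - gamma * h * ip (Po s (pi s))
      (fun s' => v s' - robust_value D beta Po gamma pi r s'
                 + \sum_(i < m) lam i * robust_value D beta Po gamma pi (g i) s').

Definition supnorm (v : S -> R) : R := \big[Num.max/0]_(s : S) `|v s|.

End RMDP.

(* Main.v *)
Require Import Defs.
From HB Require Import structures.
From mathcomp Require Import all_boot all_order all_algebra.
From mathcomp Require Import all_classical all_reals all_analysis.
From mathcomp Require Import ring lra.
Import Order.TTheory GRing.Theory Num.Theory.
Import numFieldNormedType.Exports.
Set Implicit Arguments. Unset Strict Implicit. Unset Printing Implicit Defensive.
Local Open Scope classical_set_scope.
Local Open Scope ring_scope.

Lemma inf_min (R : realType) (E : set R) x :
  E x -> (forall y, E y -> x <= y) -> inf E = x.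
Proof.
move=> Ex lb; apply/le_anti/andP; split.
  by apply: ge_inf => //; exists x => y /lb.
by apply: lb_le_inf; [exists x | move=> y /lb].
Qed.

Lemma ipD (R : realType) (S : finType) (p v w : S -> R) :
  ip p (fun s => v s + w s) = ip p v + ip p w.
Proof. by rewrite /ip -big_split /=; apply: eq_bigr => s _; rewrite mulrDr. Qed.

Lemma ipN (R : realType) (S : finType) (p v : S -> R) :
  ip p (fun s => - v s) = - ip p v.
Proof. by rewrite /ip -sumrN; apply: eq_bigr => s _; rewrite mulrN. Qed.

Lemma ipB (R : realType) (S : finType) (p v w : S -> R) :
  ip p (fun s => v s - w s) = ip p v - ip p w.
Proof. by rewrite ipD ipN. Qed.

Lemma ipZ (R : realType) (S : finType) (p v : S -> R) c :
  ip p (fun s => c * v s) = c * ip p v.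
Proof. by rewrite /ip mulr_sumr; apply: eq_bigr => s _; rewrite mulrCA. Qed.

Lemma ipC (R : realType) (S : finType) (p : S -> R) c :
  is_dist p -> ip p (fun _ => c) = c.
Proof. by case=> _ h1; rewrite /ip -mulr_suml h1 mul1r. Qed.

Lemma ip_le (R : realType) (S : finType) (p v w : S -> R) :
  (forall s, 0 <= p s) -> (forall s, v s <= w s) -> ip p v <= ip p w.
Proof. by move=> p0 vw; apply: ler_sum => s _; apply: ler_wpM2l. Qed.

Lemma ip_ge0 (R : realType) (S : finType) (p v : S -> R) :
  (forall s, 0 <= p s) -> (forall s, 0 <= v s) -> 0 <= ip p v.
Proof. by move=> p0 v0; apply: sumr_ge0 => s _; apply: mulr_ge0. Qed.

Lemma ip_sum (R : realType) (S : finType) m (p : S -> R) (f : 'I_m -> S -> R) :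
  ip p (fun s => \sum_(i < m) f i s) = \sum_(i < m) ip p (f i).
Proof.
rewrite /ip exchange_big /=; apply: eq_bigr => s _; by rewrite mulr_sumr.
Qed.

Lemma le_sum_nneg (R : realType) (S : finType) (f : S -> R) s :
  (forall s, 0 <= f s) -> f s <= \sum_s' f s'.
Proof.
move=> f0; rewrite (bigD1 s) //= lerDl; exact: sumr_ge0.
Qed.

Lemma cvg_fsum (R : realType) (I : finType) (f : I -> nat -> R) (l : I -> R) :
  (forall i, (f i : R^nat) @ \oo --> (l i : R)) ->
  (fun n => \sum_i f i n) @ \oo --> (\sum_i l i : R).
Proof.
move=> H; rewrite /index_enum; elim: (Finite.enum I) => [|i r IH].
  rewrite big_nil; under eq_fun do rewrite big_nil; exact: cvg_cst.
rewrite big_cons; under eq_fun do rewrite big_cons; exact: cvgD.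
Qed.

Lemma sd_dist (R : realType) (S A : finType) (Ks : nat -> S -> A -> S -> R) pi s0 :
  (forall t s a, is_dist (Ks t s a)) -> forall t, is_dist (state_dist Ks pi s0 t).
Proof.
move=> HK; elim=> [|t [IH0 IH1]] /=.
  split; first by move=> s; case: (s == s0).
  by rewrite -big_mkcond /= big_pred1_eq.
split.
  move=> s'; apply: sumr_ge0 => s _; apply: mulr_ge0 => //; exact: (HK t s (pi s)).1.
rewrite exchange_big /= -[RHS]IH1; apply: eq_bigr => s _.
by rewrite -mulr_sumr (HK t s (pi s)).2 mulr1.
Qed.

Lemma ip_step (R : realType) (S A : finType) (Ks : nat -> S -> A -> S -> R) pi s0 t w :
  ip (state_dist Ks pi s0 t.+1) w =
  ip (state_dist Ks pi s0 t) (fun s => ip (Ks t s (pi s)) w).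
Proof.
rewrite /ip /=; under eq_bigr do rewrite mulr_suml.
rewrite exchange_big /=; apply: eq_bigr => s _; rewrite mulr_sumr.
by apply: eq_bigr => s' _; rewrite mulrA.
Qed.

Lemma ip_sd0 (R : realType) (S A : finType) (Ks : nat -> S -> A -> S -> R) pi s0 w :
  ip (state_dist Ks pi s0 0) w = w s0.
Proof.
rewrite /ip /=; under eq_bigr do rewrite (fun_if (fun x => x * w _)) mul1r mul0r.
by rewrite -big_mkcond /= big_pred1_eq.
Qed.

Lemma sd_identity (R : realType) (S A : finType) (Ks : nat -> S -> A -> S -> R) pi s0
  (gamma : R) (u W : S -> R) n :
  \sum_(0 <= t < n) (gamma ^+ t * ip (state_dist Ks pi s0 t) u)
   + gamma ^+ n * ip (state_dist Ks pi s0 n) W - W s0 =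
  \sum_(0 <= t < n) (gamma ^+ t * ip (state_dist Ks pi s0 t)
       (fun s => u s + gamma * ip (Ks t s (pi s)) W - W s)).
Proof.
elim: n => [|n IH].
  by rewrite !big_geq // expr0 mul1r ip_sd0 add0r subrr.
rewrite !big_nat_recr //= -IH ip_step exprSr ipB ipD ipZ; ring.
Qed.

Lemma geom_bound (R : realType) (gamma M : R) n :
  0 <= gamma -> gamma < 1 -> 0 <= M ->
  \sum_(0 <= t < n) gamma ^+ t * M <= M / (1 - gamma).
Proof.
move=> g0 g1 M0.
have hK : M + gamma * (M / (1 - gamma)) = M / (1 - gamma).
  by field; rewrite subr_eq0 gt_eqF.
have K0 : 0 <= M / (1 - gamma) by apply: divr_ge0; rewrite // subr_ge0 ltW.
elim: n => [|n IH]; first by rewrite big_geq.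
rewrite big_nat_recl // expr0 mul1r -[X in _ <= X]hK lerD2l.
under eq_bigr do rewrite exprS -mulrA.
rewrite -mulr_sumr; exact: ler_wpM2l.
Qed.

Lemma J_props (R : realType) (S A : finType) (Ks : nat -> S -> A -> S -> R) pi s0
  (gamma : R) (u : S -> R) :
  0 <= gamma -> gamma < 1 -> (forall s, 0 <= u s) ->
  (forall t s a, is_dist (Ks t s a)) ->
  let J := fun n => \sum_(0 <= t < n) (gamma ^+ t * ip (state_dist Ks pi s0 t) u) in
  {homo J : n m / (n <= m)%N >-> n <= m} /\ cvgn J.
Proof.
move=> g0 g1 u0 HK J.
have hom : {homo J : n m / (n <= m)%N >-> n <= m}.
  apply/nondecreasing_seqP => n; rewrite /J big_nat_recr //= lerDl.
  apply: mulr_ge0; first exact: exprn_ge0.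
  apply: ip_ge0 => //.
  by have [] := sd_dist pi s0 HK n.
split => //; apply/cvg_ex; exists (sup (range J)).
apply: nondecreasing_cvgn => //.
exists ((\sum_s u s) / (1 - gamma)) => _ [n _ <-].
apply: le_trans (geom_bound n g0 g1 (sumr_ge0 _ (fun s _ => u0 s))).
apply: ler_sum => t _; apply: ler_wpM2l; first exact: exprn_ge0.
have [d0 d1] := sd_dist pi s0 HK t.
apply: ler_sum => s _; rewrite -[X in _ <= X]mul1r; apply: ler_wpM2r => //.
by rewrite -d1; apply: le_sum_nneg.
Qed.

Lemma nearWn (P : nat -> Prop) : (forall n, P n) -> \forall n \near \oo, P n.
Proof. move=> H; exact: filterE. Qed.

Lemma lim_lower (R : realType) (J : nat -> R) (gamma C x : R) :
  0 <= gamma -> gamma < 1 -> cvgn J ->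
  (forall n, x <= J n + gamma ^+ n * C) -> x <= limn J.
Proof.
move=> g0 g1 cJ H.
have cg : (fun n => J n + gamma ^+ n * C) @ \oo --> limn J + 0 * C.
  apply: cvgD => //; apply: cvgMr_tmp; apply: cvg_expr.
  by rewrite ger0_norm.
have := limr_ge (cvgP _ cg) (nearWn H).
rewrite (cvg_lim _ cg) //.
by rewrite mul0r addr0; apply; exact: _.
Qed.

Lemma bellman (R : realType) (S A : finType) D beta Po (gamma : R) (pi : S -> A)
  (pm : S -> A -> (S -> R) -> (S -> R)) (u0 : S -> A -> R) :
  0 <= gamma -> gamma < 1 ->
  (forall s a w, unc_set D beta Po s a (pm s a w)) ->
  (forall s a w q, unc_set D beta Po s a q -> ip (pm s a w) w <= ip q w) ->
  (forall s a, 0 <= u0 s a) ->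
  forall s, robust_value D beta Po gamma pi u0 s = u0 s (pi s) +
    gamma * ip (pm s (pi s) (robust_value D beta Po gamma pi u0))
                (robust_value D beta Po gamma pi u0).
Proof.
move=> g0 g1 Hpm1 Hpm2 u00.
pose u := fun s => u0 s (pi s).
have u_ge0 : forall s, 0 <= u s by move=> s; exact: u00.
pose mn s w := ip (pm s (pi s) w) w.
have pd : forall s a w, is_dist (pm s a w) by move=> s a w; case: (Hpm1 s a w).
have pd0 : forall s a w s', 0 <= pm s a w s' by move=> s a w; case: (pd s a w).
have mn_shift : forall s w1 w2 d, (forall s', w2 s' <= w1 s' + d) ->
    mn s w2 <= mn s w1 + d.
  move=> s w1 w2 d H; apply: (le_trans (Hpm2 _ _ _ _ (Hpm1 s (pi s) w1))).
  rewrite /mn -(ipC d (pd s (pi s) w1)) -ipD; exact: ip_le.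
have mn_mono : forall s w1 w2, (forall s', w1 s' <= w2 s') -> mn s w1 <= mn s w2.
  move=> s w1 w2 H; rewrite -[mn s w2]addr0; apply: mn_shift => s'; rewrite addr0; exact: H.
pose B w s := u s + gamma * mn s w.
have B_mono : forall w1 w2 s, (forall s', w1 s' <= w2 s') -> B w1 s <= B w2 s.
  move=> w1 w2 s H; rewrite /B lerD2l; apply: ler_wpM2l => //; exact: mn_mono.
have mn_ge0 : forall s w, (forall s', 0 <= w s') -> 0 <= mn s w.
  by move=> s w H; apply: ip_ge0.
pose V n := iter n B (fun _ => 0).
have V_ge0 : forall n s, 0 <= V n s.
  elim=> [|n IH] s //=; apply: addr_ge0 => //; apply: mulr_ge0 => //; exact: mn_ge0.
pose M := \sum_s u s.
pose K := M / (1 - gamma).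
have hK : M + gamma * K = K by rewrite /K; field; rewrite subr_eq0 gt_eqF.
have V_leK : forall n s, V n s <= K.
  elim=> [|n IH] s /=.
    by apply: divr_ge0; [exact: sumr_ge0 | rewrite subr_ge0 ltW].
  rewrite -hK; apply: lerD; first exact: le_sum_nneg.
  apply: ler_wpM2l => //; rewrite -(ipC K (pd s (pi s) (V n))); exact: ip_le.
have V_mono : forall s, {homo (fun n => V n s) : n m / (n <= m)%N >-> n <= m}.
  move=> s; apply/nondecreasing_seqP => n; elim: n s => [|n IH] s.
    exact: V_ge0.
  exact: B_mono.
have cvV : forall s, cvgn (fun n => V n s).
  move=> s; apply/cvg_ex; exists (sup (range (fun n => V n s))).
  apply: nondecreasing_cvgn => //; exists K => _ [n _ <-]; exact: V_leK.
pose W s := limn (fun n => V n s).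
have V_leW : forall n s, V n s <= W s.
  by move=> n s; apply: nondecreasing_cvgn_le => //; exact: V_mono.
have W_ge0 : forall s, 0 <= W s by move=> s; apply: le_trans (V_leW 0%N s).
have BW : forall s, W s = B W s.
  move=> s; apply/le_anti/andP; split.
    apply: limr_le; first exact: cvV.
    apply: nearWn => -[|n] /=; first by apply: addr_ge0 => //; apply: mulr_ge0 => //; exact: mn_ge0.
    by apply: B_mono => s'; exact: V_leW.
  pose dl n := \sum_s' (W s' - V n s').
  have cd : dl @ \oo --> \sum_s' (W s' - W s').
    apply: cvg_fsum => s'; apply: cvgB; [exact: cvg_cst | exact: cvV].
  have cV1 : (fun n => V n.+1 s) @ \oo --> W s.
    have := cvV s; by rewrite -cvg_shiftS.
  have cg : (fun n => V n.+1 s + gamma * dl n) @ \oo --> W s + gamma * \sum_s' (W s' - W s').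
    by apply: cvgD => //; apply: cvgMl_tmp.
  have := limr_ge (cvgP _ cg) (nearWn (_ : forall n, B W s <= V n.+1 s + gamma * dl n)).
  rewrite (cvg_lim _ cg) //.
  under eq_bigr do rewrite subrr.
  rewrite big1 // mulr0 addr0; apply.
  move=> n /=; rewrite /B -addrA lerD2l -mulrDr; apply: ler_wpM2l => //.
  apply: mn_shift => s'; rewrite -lerBlDl.
  rewrite /dl; apply: (@le_sum_nneg _ _ (fun s2 => W s2 - V n s2)) => s2; rewrite subr_ge0; exact: V_leW.
pose pstar s a := pm s a W.
have adm : forall Ks : nat -> S -> A -> S -> R, (forall t, kernel_in D beta Po (Ks t)) ->
    forall t s, W s <= u s + gamma * ip (Ks t s (pi s)) W.
  move=> Ks HKs t s.
  rewrite (BW s) /B lerD2l; apply: ler_wpM2l => //.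
  exact: (Hpm2 _ _ _ _ (HKs t s (pi s))).
have ex_adm : forall t : nat, kernel_in D beta Po ((fun _ => pstar) t).
  by move=> t s a; exact: (Hpm1 s a W).
pose C := \sum_s W s.
have lowJ : forall Ks : nat -> S -> A -> S -> R, (forall t, kernel_in D beta Po (Ks t)) -> forall s0 n,
   W s0 <= \sum_(0 <= t < n) (gamma ^+ t * ip (state_dist Ks pi s0 t) u)
           + gamma ^+ n * C.
  move=> Ks HKs s0 n.
  have HK : forall t s a, is_dist (Ks t s a) by move=> t s a; case: (HKs t s a).
  have [d0 d1] := sd_dist pi s0 HK n.
  apply: (le_trans (y := \sum_(0 <= t < n) (gamma ^+ t * ip (state_dist Ks pi s0 t) u)
           + gamma ^+ n * ip (state_dist Ks pi s0 n) W)); last first.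
    rewrite lerD2l; apply: ler_wpM2l; first exact: exprn_ge0.
    apply: ler_sum => s _; rewrite -[X in _ <= X]mul1r; apply: ler_wpM2r => //.
    by rewrite -d1; apply: le_sum_nneg.
  rewrite -subr_ge0 sd_identity; apply: sumr_ge0 => t _; apply: mulr_ge0.
    exact: exprn_ge0.
  have [e0 _] := sd_dist pi s0 HK t.
  by apply: ip_ge0 => // s; rewrite subr_ge0; exact: adm.
have Wfun : robust_value D beta Po gamma pi u0 = W.
  apply/funext => s0; apply: inf_min.
    exists (fun _ => pstar) => //; rewrite /disc_return.
    have HK : forall t s a, is_dist ((fun _ : nat => pstar) t s a).
      by move=> t s a; case: (ex_adm t s a).
    have [_ cJ] := J_props pi s0 g0 g1 u_ge0 HK.
    apply/le_anti/andP; split.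
      apply: limr_le => //; apply: nearWn => n.
      have := sd_identity (fun _ => pstar) pi s0 gamma u W n.
      have Z2 : \sum_(0 <= t < n) (gamma ^+ t * ip (state_dist (fun=> pstar) pi s0 t)
           (fun s => u s + gamma * ip ((fun=> pstar) t s (pi s)) W - W s)) = 0.
        apply: big1 => t _; rewrite (_ : (fun s => u s + gamma * ip ((fun=> pstar) t s (pi s)) W - W s) = (fun _ => 0)).
          by rewrite (ipC 0 (sd_dist pi s0 HK t)) mulr0.
        by apply/funext => s; rewrite /= -/(mn s W) -/(B W s) -BW subrr.
      rewrite Z2.
      move/eqP; rewrite subr_eq0 => /eqP <-; rewrite lerDl; apply: mulr_ge0.
        exact: exprn_ge0.
      by apply: ip_ge0 => //; case: (sd_dist pi s0 HK n).
    exact: (lim_lower g0 g1 cJ (lowJ _ ex_adm s0)).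
  move=> _ [Ks HKs <-]; rewrite /disc_return.
  have HK : forall t s a, is_dist (Ks t s a) by move=> t s a; case: (HKs t s a).
  have [_ cJ] := J_props pi s0 g0 g1 u_ge0 HK.
  exact: (lim_lower g0 g1 cJ (lowJ _ HKs s0)).
by move=> s; rewrite Wfun {1}BW.
Qed.

Lemma ipB1 (R : realType) (S : finType) (p q w : S -> R) :
  ip (fun s => p s - q s) w = ip p w - ip q w.
Proof. by rewrite /ip -sumrB; apply: eq_bigr => s _; rewrite mulrBl. Qed.

Lemma supnorm_ge0 (R : realType) (S : finType) (f : S -> R) : 0 <= supnorm f.
Proof.
rewrite /supnorm; elim/big_ind: _ => // x y hx hy.
by rewrite le_max hx.
Qed.

Lemma supnorm_ge (R : realType) (S : finType) (f : S -> R) s : `|f s| <= supnorm f.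
Proof. rewrite /supnorm; exact: (le_bigmax _ (fun s => `|f s|) s). Qed.

Theorem proposition6 (R : realType) (S A : finType) (gamma : R)
  (Po : S -> A -> S -> R) (D : (S -> R) -> (S -> R) -> R) (beta : S -> A -> R)
  (Rbar : R) (r : S -> A -> R) (m : nat) (tau : 'I_m -> R)
  (g : 'I_m -> S -> A -> R) (lam : 'I_m -> R) (h : R) :
  0 <= gamma -> gamma < 1 ->
  (forall s a, is_dist (Po s a)) ->
  (* minima over the uncertainty sets are attained *)
  (forall s a (w : S -> R), exists2 p, unc_set D beta Po s a p &
     forall q, unc_set D beta Po s a q -> ip p w <= ip q w) ->
  (forall s a, 0 <= r s a <= Rbar) ->
  (forall i s a, 0 <= g i s a <= tau i) ->
  (forall i, 0 <= lam i) ->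
  0 <= h -> h < 1 ->
  forall pi : S -> A,
  let T1 := T1op D beta Po gamma r g lam h pi in
  let Vstar := fun s => robust_value D beta Po gamma pi r s
      - \sum_(i < m) lam i * robust_value D beta Po gamma pi (g i) s in
  (* (1) monotonicity *)
  (forall v1 v2 : S -> R, (forall s, v2 s <= v1 s) ->
     forall s, T1 v2 s <= T1 v1 s) /\
  (* (2) translation invariance *)
  (forall (v : S -> R) (c : R) s,
     T1 (fun s' => v s' + c) s = T1 v s + gamma * (1 - h) * c) /\
  (* (3) contraction with modulus gamma (1 - h), unique fixed point Vstar *)
  (forall v1 v2 : S -> R,
     supnorm (fun s => T1 v1 s - T1 v2 s)
       <= gamma * (1 - h) * supnorm (fun s => v1 s - v2 s)) /\
  (forall s, T1 Vstar s = Vstar s) /\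
  (forall w : S -> R, (forall s, T1 w s = w s) -> forall s, w s = Vstar s).
Proof.
move=> g0 g1 HPo Hmin Hr Hg Hlam h0 h1 pi T1 Vstar.
have : forall x : S * A * (S -> R), exists p : S -> R,
   unc_set D beta Po x.1.1 x.1.2 p /\
   forall q, unc_set D beta Po x.1.1 x.1.2 q -> ip p x.2 <= ip q x.2.
  by move=> [[s a] w]; have [p h2 h3] := Hmin s a w; exists p.
move=> /choice [f Hf].
pose pm s a w := f (s, a, w).
have Hpm1 : forall s a w, unc_set D beta Po s a (pm s a w) by move=> s a w; case: (Hf (s, a, w)).
have Hpm2 : forall s a w q, unc_set D beta Po s a q -> ip (pm s a w) w <= ip q w.
  by move=> s a w; case: (Hf (s, a, w)).
have md : forall s a w, min_dev D beta Po s a w = ip (pm s a w) w - ip (Po s a) w.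
  move=> s a w; apply: inf_min.
    exists (pm s a w); [exact: Hpm1 | idtac].
    exact: ipB1.
  by move=> _ [q Hq <-]; rewrite ipB1 lerD2r; exact: Hpm2.
have bell : forall u0 : S -> A -> R, (forall s a, 0 <= u0 s a) -> forall s,
   robust_value D beta Po gamma pi u0 s = u0 s (pi s)
     + gamma * ip (Po s (pi s)) (robust_value D beta Po gamma pi u0)
     + gamma * min_dev D beta Po s (pi s) (robust_value D beta Po gamma pi u0).
  move=> u0 Hu0 s; rewrite md (bellman pi g0 g1 Hpm1 Hpm2 Hu0 s); ring.
have BVr := bell r (fun s a => (andP (Hr s a)).1).
have BVg := fun i => bell (g i) (fun s a => (andP (Hg i s a)).1).
have pd0 : forall s a s', 0 <= Po s a s' by move=> s a; case: (HPo s a).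
have c0 : 0 <= gamma * (1 - h) by apply: mulr_ge0 => //; rewrite subr_ge0 ltW.
have dec : forall v s, T1 v s = T1 (fun _ => 0) s + gamma * (1 - h) * ip (Po s (pi s)) v.
  move=> v s; rewrite /T1 /T1op /Top !(ipD, ipN) (ipC 0 (HPo s (pi s))); ring.
split.
  move=> v1 v2 H s; rewrite (dec v1) (dec v2) lerD2l; apply: ler_wpM2l => //.
  exact: ip_le.
split.
  by move=> v c s; rewrite dec [T1 v s]dec ipD (ipC c (HPo s (pi s))); ring.
have contr : forall v1 v2 : S -> R,
     supnorm (fun s => T1 v1 s - T1 v2 s)
       <= gamma * (1 - h) * supnorm (fun s => v1 s - v2 s).
  move=> v1 v2; rewrite {1}/supnorm; apply: bigmax_le => [|s _].
    by apply: mulr_ge0 => //; exact: supnorm_ge0.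
  rewrite (_ : T1 v1 s - T1 v2 s = gamma * (1 - h) * (ip (Po s (pi s)) v1 - ip (Po s (pi s)) v2)); last first.
    by rewrite (dec v1) (dec v2); ring.
  rewrite normrM ger0_norm //.
  apply: ler_wpM2l => //; rewrite -ipB.
  apply: (le_trans (ler_norm_sum _ _ _)).
  rewrite -(ipC (supnorm (fun s => v1 s - v2 s)) (HPo s (pi s))).
  apply: ler_sum => s' _; rewrite normrM ger0_norm //; apply: ler_wpM2l => //.
  exact: (supnorm_ge (fun s => v1 s - v2 s)).
split => //.
have fixV : forall s, T1 Vstar s = Vstar s.
  move=> s; rewrite /T1 /T1op /Top.
  rewrite (_ : (fun s' => Vstar s' - robust_value D beta Po gamma pi r s' + _) = (fun _ => 0)); last first.
    by apply/funext => s'; rewrite /Vstar; ring.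
  rewrite (ipC 0 (HPo s (pi s))) mulr0 subr0.
  rewrite /Vstar ipB ip_sum.
  have E0 : \sum_(i < m) ip (Po s (pi s)) (fun s0 => lam i * robust_value D beta Po gamma pi (g i) s0)
     = \sum_(i < m) lam i * ip (Po s (pi s)) (robust_value D beta Po gamma pi (g i)).
    by apply: eq_bigr => i _; exact: ipZ.
  rewrite E0.
  have E : \sum_(i < m) lam i * robust_value D beta Po gamma pi (g i) s
       = \sum_(i < m) lam i * g i s (pi s)
       + gamma * \sum_(i < m) lam i * ip (Po s (pi s)) (robust_value D beta Po gamma pi (g i))
       + gamma * \sum_(i < m) lam i * min_dev D beta Po s (pi s) (robust_value D beta Po gamma pi (g i)).
    rewrite !mulr_sumr -!big_split /=; apply: eq_bigr => i _.
    rewrite BVg; ring.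
  rewrite E (BVr s); ring.
split => // w Hw s.
have N0 := supnorm_ge0 (fun s => w s - Vstar s).
have := contr w Vstar.
rewrite (_ : (fun s => T1 w s - T1 Vstar s) = (fun s => w s - Vstar s)); last first.
  by apply/funext => s'; rewrite Hw fixV.
move=> HN.
have HN0 : supnorm (fun s => w s - Vstar s) <= 0.
  have hc : gamma * (1 - h) < 1.
    apply: (le_lt_trans (y := gamma)) => //.
    rewrite -[X in _ <= X]mulr1; apply: ler_wpM2l => //; rewrite lerBlDr lerDl //.
  nra.
have := le_trans (supnorm_ge (fun s => w s - Vstar s) s) HN0.
by rewrite normr_le0 subr_eq0 => /eqP.
Qed.
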